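(* Let $a_0,a_1,a_3\in\mathbb{C}$. The third-order recursion $$z_n = \frac{a_3 z_{n-3} + z_{n-2} + a_1 z_{n-1} + a_0}{z_{n-3}}$$ is periodic with period $8$ (i.e. $z_9=z_1$, $z_{10}=z_2$, $z_{11}=z_3$ in $\mathbb{C}(z_1,z_2,z_3)$) if and only if $(a_0,a_1,a_3)=(-1,-1,0)$ or $(a_0,a_1,a_3)=(1,1,0)$.
   Context: Let $z_1,z_2,z_3$ be independent indeterminates over $\mathbb{C}$ and define $z_n\in\mathbb{C}(z_1,z_2,z_3)$ for $n\ge4$ by the recursion. A third-order recursion is periodic with period $k$ if all iterates are well-defined elements of $\mathbb{C}(z_1,z_2,z_3)$ (no denominator identically zero) and $z_{k+1}=z_1$, $z_{k+2}=z_2$, $z_{k+3}=z_3$. *)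

(* Defs.v *)
From HB Require Import structures.
From mathcomp Require Import all_boot all_order all_algebra.
From mathcomp Require Import fraction.
From mathcomp Require Import mpoly.
From mathcomp Require Import complex.
From mathcomp Require Import Rstruct.
Set Implicit Arguments. Unset Strict Implicit. Unset Printing Implicit Defensive.
Import GRing.Theory.
Local Open Scope ring_scope.

Definition CC : Type := complex Rdefinitions.R.

Definition RF : Type := {fraction {mpoly CC[3]}}.

(* The indeterminates z_1, z_2, z_3 as elements of C(z1,z2,z3)
   (i ranges over 'I_3, i.e. 0,1,2 stand for z_1,z_2,z_3). *)
Definition zvar (i : 'I_3) : RF := @FracField.tofrac {mpoly CC[3]} 'X_i.

Definition cst (c : CC) : RF := @FracField.tofrac {mpoly CC[3]} (c %:MP_[3]).

Definition rstep (a0 a1 a3 : CC) (s : RF * RF * RF) : RF * RF * RF :=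
  let: (x, y, w) := s in
  (y, w, (cst a3 * x + y + cst a1 * w + cst a0) / x).

(* zseq a0 a1 a3 n = z_{n+1}  (0-based index: zseq 0 = z_1, zseq 1 = z_2, ...) *)
Definition zseq (a0 a1 a3 : CC) (n : nat) : RF :=
  (iter n (rstep a0 a1 a3) (zvar ord0, zvar (inord 1), zvar (inord 2))).1.1.

(* Periodicity with period k: all iterates z_4, ..., z_{k+3} are well defined,
   i.e. their denominators z_1, ..., z_k are nonzero in C(z1,z2,z3), and
   z_{k+1} = z_1, z_{k+2} = z_2, z_{k+3} = z_3. *)
Definition periodic_with (a0 a1 a3 : CC) (k : nat) : Prop :=
  (forall n, (n < k)%N -> zseq a0 a1 a3 n != 0) /\
  zseq a0 a1 a3 k = zseq a0 a1 a3 0 /\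
  zseq a0 a1 a3 k.+1 = zseq a0 a1 a3 1 /\
  zseq a0 a1 a3 k.+2 = zseq a0 a1 a3 2.

(* Main.v *)
Require Import Defs.
From HB Require Import structures.
From mathcomp Require Import all_boot all_order all_algebra.
From mathcomp Require Import fraction mpoly complex Rstruct.
From mathcomp Require Import ring.

Set Implicit Arguments. Unset Strict Implicit. Unset Printing Implicit Defensive.
Import GRing.Theory Num.Theory.
Local Open Scope ring_scope.

Section E.
Variable R : comNzRingType.
Variables a0 a1 a3 x y w : R.
Definition n4 := a3 * x+y+a1 * w+a0.
Definition n5 := a3 * x * y+x * w+a1 * n4+a0 * x.
Definition n6 := a3 * x * y * w+y * n4+a1 * n5+a0 * x * y.
Definition q8 := x+a1 * y+a0.
Definition q7 := q8+(a1 * x+a0) * (w-a3).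
Definition q6 := q7+a1 * q8 * (y-a3)+a0 * (w-a3) * (y-a3).
Definition E1 := n6 * (w-a3) * (y-a3) * (x-a3)-q6 * x * y * w.
Definition E3 := q8 * n5 * w * (y-a3)-(a3 * n5 * w * (w-a3) * (y-a3)+n6 * (w-a3) * (y-a3)+a1 * q7 * x * y * w+a0 * x * y * w * (w-a3) * (y-a3)).
End E.

Lemma E1_morph (R S : comNzRingType) (f : {rmorphism R -> S}) a0 a1 a3 x y w :
  f (E1 a0 a1 a3 x y w) = E1 (f a0) (f a1) (f a3) (f x) (f y) (f w).
Proof. rewrite /E1 /n6 /n5 /n4 /q6 /q7 /q8; by repeat (rewrite rmorphB || rewrite rmorphM || rewrite rmorphD). Qed.
Lemma E3_morph (R S : comNzRingType) (f : {rmorphism R -> S}) a0 a1 a3 x y w :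
  f (E3 a0 a1 a3 x y w) = E3 (f a0) (f a1) (f a3) (f x) (f y) (f w).
Proof. rewrite /E3 /n6 /n5 /n4 /q6 /q7 /q8; by repeat (rewrite rmorphB || rewrite rmorphM || rewrite rmorphD). Qed.

Lemma E_eval (E : forall R : comNzRingType, R -> R -> R -> R -> R -> R -> R)
  (Em : forall (R S : comNzRingType) (f : {rmorphism R -> S}) a0 a1 a3 x y w,
     f (E R a0 a1 a3 x y w) = E S (f a0) (f a1) (f a3) (f x) (f y) (f w))
  (a0 a1 a3 : CC) :
  E RF (cst a0) (cst a1) (cst a3) (zvar ord0) (zvar (inord 1)) (zvar (inord 2)) = 0 ->
  forall p q r : CC, E CC a0 a1 a3 p q r = 0.
Proof.
move=> H p q r.
pose v : 'I_3 -> CC := fun i => nth 0 [:: p; q; r] (val i).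
have : E {mpoly CC[3]} a0%:MP a1%:MP a3%:MP 'X_ord0 'X_(inord 1) 'X_(inord 2) = 0.
  apply/eqP; rewrite -(@tofrac_eq0 {mpoly CC[3]}).
  by rewrite (Em _ _ (@FracField.tofrac {mpoly CC[3]})); apply/eqP.
move/(congr1 (meval v)); rewrite (Em _ _ (meval v)) rmorph0.
rewrite /= !mevalC !mevalXU /v /= !inordK //.
Qed.
Section S.
Variables a0 a1 a3 : CC.
Let z := zseq a0 a1 a3.
Let init : RF * RF * RF := (zvar ord0, zvar (inord 1), zvar (inord 2)).
Let st n := iter n (rstep a0 a1 a3) init.

Lemma st11 n : (st n.+1).1.1 = (st n).1.2.
Proof. rewrite /st iterS; by case: (iter _ _ _) => [[]]. Qed.
Lemma st12 n : (st n.+1).1.2 = (st n).2.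
Proof. rewrite /st iterS; by case: (iter _ _ _) => [[]]. Qed.
Lemma st2 n : (st n.+1).2 = (cst a3 * (st n).1.1 + (st n).1.2 + cst a1 * (st n).2 + cst a0) / (st n).1.1.
Proof. rewrite /st iterS; by case: (iter _ _ _) => [[]]. Qed.

Lemma zrec n : z n.+3 = (cst a3 * z n + z n.+1 + cst a1 * z n.+2 + cst a0) / z n.
Proof.
have e1 : forall m, z m.+1 = (st m).1.2 by move=> m; rewrite /z /zseq -/(st _) st11.
have e2 : forall m, z m.+2 = (st m).2 by move=> m; rewrite e1 st12.
by rewrite e2 st2 e1 e2.
Qed.
End S.


Lemma E_RF a0 a1 a3 : periodic_with a0 a1 a3 8 ->
  E1 (cst a0) (cst a1) (cst a3) (zvar ord0) (zvar (inord 1)) (zvar (inord 2)) = 0 /\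
  E3 (cst a0) (cst a1) (cst a3) (zvar ord0) (zvar (inord 1)) (zvar (inord 2)) = 0.
Proof.
case=> nz [p0 [p1 p2]].
have Rn n : (n < 8)%N -> zseq a0 a1 a3 n.+3 * zseq a0 a1 a3 n =
   cst a3 * zseq a0 a1 a3 n + zseq a0 a1 a3 n.+1 + cst a1 * zseq a0 a1 a3 n.+2 + cst a0.
  by move=> hn; rewrite zrec divfK // nz.
have e0 : zseq a0 a1 a3 0 = zvar ord0 by [].
have e1 : zseq a0 a1 a3 1 = zvar (inord 1) by [].
have e2 : zseq a0 a1 a3 2 = zvar (inord 2) by [].
have R0 := Rn 0%N isT. have R1 := Rn 1%N isT. have R2 := Rn 2%N isT.
have R3 := Rn 3%N isT. have R4 := Rn 4%N isT. have R5 := Rn 5%N isT.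
have R6 := Rn 6%N isT. have R7 := Rn 7%N isT.
rewrite ?p0 ?p1 ?p2 ?e0 ?e1 ?e2 in R0 R1 R2 R3 R4 R5 R6 R7.
move: R0 R1 R2 R3 R4 R5 R6 R7.
move: (zseq a0 a1 a3 3) (zseq a0 a1 a3 4) (zseq a0 a1 a3 5) (zseq a0 a1 a3 6) (zseq a0 a1 a3 7).
move: (zvar ord0) (zvar (inord 1)) (zvar (inord 2)) (cst a0) (cst a1) (cst a3).
move=> x y w A0 A1 A3 z3 z4 z5 z6 z7 R0 R1 R2 R3 R4 R5 R6 R7.
have h4 : n4 A0 A1 A3 x y w = z3 * x by rewrite /n4 R0.
have h5 : n5 A0 A1 A3 x y w = z4 * x * y.
  rewrite /n5 h4; transitivity (x * (A3 * y + w + A1 * z3 + A0)); first ring.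
  by rewrite -R1; ring.
have h6 : n6 A0 A1 A3 x y w = z5 * x * y * w.
  rewrite /n6 h4 h5; transitivity (x * y * (A3 * w + z3 + A1 * z4 + A0)); first ring.
  by rewrite -R2; ring.
have g8 : q8 A0 A1 x y = z7 * (w - A3).
  rewrite /q8; transitivity (w * z7 - A3 * z7); last ring.
  by rewrite R7; ring.
have g7 : q7 A0 A1 A3 x y w = z6 * (y - A3) * (w - A3).
  rewrite /q7 g8; transitivity ((y * z6 - A3 * z6) * (w - A3)); last ring.
  by rewrite R6; ring.
have g6 : q6 A0 A1 A3 x y w = z5 * (x - A3) * (y - A3) * (w - A3).
  rewrite /q6 g7 g8; transitivity ((x * z5 - A3 * z5) * (y - A3) * (w - A3)); last ring.
  by rewrite R5; ring.
split.
  by rewrite /E1 h6 g6; ring.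
rewrite /E3 g8 h5 h6 g7.
transitivity (x * y * w * (w - A3) * (y - A3) * (z7 * z4 - (A3 * z4 + z5 + A1 * z6 + A0))); first ring.
by rewrite R4 subrr mulr0.
Qed.

Lemma only_if a0 a1 a3 : periodic_with a0 a1 a3 8 ->
  (a0, a1, a3) = (-1, -1, 0) \/ (a0, a1, a3) = (1, 1, 0).
Proof.
move=> /E_RF [H1 H3].
have F1 := @E_eval (@E1) (@E1_morph) a0 a1 a3 H1.
have F3 := @E_eval (@E3) (@E3_morph) a0 a1 a3 H3.
have ha3 : a3 = 0.
  have : 6%:R * a3 = E3 a0 a1 a3 0 2%:R 0 - 3%:R * E3 a0 a1 a3 0 1 0
          + 3%:R * E3 a0 a1 a3 0 0 0 - E3 a0 a1 a3 0 (-1) 0 by rewrite /E3 /n6 /n5 /n4 /q6 /q7 /q8; ring.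
  rewrite !F3 !mulr0 !subr0 addr0 => /eqP; rewrite mulf_eq0 pnatr_eq0 /= => /eqP //.
subst a3.
have h1 : 4%:R * (a0 - a1) = E1 a0 a1 0 2%:R 2%:R 1 - 2%:R * E1 a0 a1 0 1 2%:R 1
     - 2%:R * E1 a0 a1 0 2%:R 1 1 + 4%:R * E1 a0 a1 0 1 1 1 by rewrite /E1 /n6 /n5 /n4 /q6 /q7 /q8; ring.
have h2 : 4%:R * (a0 * a1 - 1) = 4%:R * E1 a0 a1 0 2%:R 1 1 - 8%:R * E1 a0 a1 0 1 1 1
     - E1 a0 a1 0 2%:R 2%:R 1 + 2%:R * E1 a0 a1 0 1 2%:R 1 by rewrite /E1 /n6 /n5 /n4 /q6 /q7 /q8; ring.
rewrite !F1 !mulr0 !subr0 !addr0 in h1 h2.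
move/eqP: h1; rewrite mulf_eq0 pnatr_eq0 /= subr_eq0 => /eqP ea.
move/eqP: h2; rewrite mulf_eq0 pnatr_eq0 /= subr_eq0 ea => /eqP e2.
subst a0.
have : (a1 - 1) * (a1 + 1) = 0 by rewrite mulrDr !mulrBl e2 mul1r mulr1; ring.
move/eqP; rewrite mulf_eq0 subr_eq0 addr_eq0 => /orP [] /eqP ->; [right | left]; by [].
Qed.

Lemma orbitP (K : fieldType) (f : nat -> K) (x y w : K) :
  f 0%N = x -> f 1%N = y -> f 2%N = w ->
  (forall n, f n.+3 = (f n.+1 + f n.+2 + 1) / f n) ->
  x != 0 -> y != 0 -> w != 0 -> y + w + 1 != 0 ->
  x * w + x + y + w + 1 != 0 -> x + y + 1 != 0 ->
  (forall n, (n < 8)%N -> f n != 0) /\ f 8%N = f 0%N /\ f 9%N = f 1%N /\ f 10%N = f 2%N.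
Proof.
move=> e0 e1 e2 Z hx hy hw h4 h5 h8.
have e3 : f 3%N = (y + w + 1) / x by rewrite Z e0 e1 e2.
have e4 : f 4%N = (x * w + x + y + w + 1) / (x * y).
  rewrite Z e1 e2 e3; field; by rewrite ?hx ?hy ?hw ?h4 ?h5 ?h8.
have e5 : f 5%N = (y + w + 1) * (x + y + 1) / (x * y * w).
  rewrite Z e2 e3 e4; field; by rewrite ?hx ?hy ?hw ?h4 ?h5 ?h8.
have e6 : f 6%N = (x * w + x + y + w + 1) / (y * w).
  rewrite Z e3 e4 e5; field; by rewrite ?hx ?hy ?hw ?h4 ?h5 ?h8.
have e7 : f 7%N = (x + y + 1) / w.
  rewrite Z e4 e5 e6; field; by rewrite ?hx ?hy ?hw ?h4 ?h5 ?h8.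
have e8 : f 8%N = x.
  rewrite Z e5 e6 e7; field; by rewrite ?hx ?hy ?hw ?h4 ?h5 ?h8.
have e9 : f 9%N = y.
  rewrite Z e6 e7 e8; field; by rewrite ?hx ?hy ?hw ?h4 ?h5 ?h8.
have e10 : f 10%N = w.
  rewrite Z e7 e8 e9; field; by rewrite ?hx ?hy ?hw ?h4 ?h5 ?h8.
split; last by rewrite e8 e9 e10 e0 e1 e2.
case=> [|[|[|[|[|[|[|[|//]]]]]]]] _;
  rewrite ?e0 ?e1 ?e2 ?e3 ?e4 ?e5 ?e6 ?e7 //;
  repeat (apply: mulf_neq0 || rewrite invr_eq0); by [].
Qed.

Lemma orbitN (K : fieldType) (f : nat -> K) (x y w : K) :
  f 0%N = x -> f 1%N = y -> f 2%N = w ->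
  (forall n, f n.+3 = (f n.+1 - f n.+2 - 1) / f n) ->
  x != 0 -> y != 0 -> w != 0 -> y - w - 1 != 0 ->
  x * w - x - y + w + 1 != 0 -> - x * y - x * w + x + y * y - y * w - w - 1 != 0 ->
  - x * w + x - y - w - 1 != 0 -> x - y - 1 != 0 ->
  (forall n, (n < 8)%N -> f n != 0) /\ f 8%N = f 0%N /\ f 9%N = f 1%N /\ f 10%N = f 2%N.
Proof.
move=> e0 e1 e2 Z hx hy hw h4 h5 h6 h7 h8.
have e3 : f 3%N = (y - w - 1) / x by rewrite Z e0 e1 e2.
have e4 : f 4%N = (x * w - x - y + w + 1) / (x * y).
  rewrite Z e1 e2 e3; field; by rewrite ?hx ?hy ?hw ?h4 ?h5 ?h6 ?h7 ?h8.
have e5 : f 5%N = (- x * y - x * w + x + y * y - y * w - w - 1) / (x * y * w).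
  rewrite Z e2 e3 e4; field; by rewrite ?hx ?hy ?hw ?h4 ?h5 ?h6 ?h7 ?h8.
have e6 : f 6%N = (- x * w + x - y - w - 1) / (y * w).
  rewrite Z e3 e4 e5; field; by rewrite ?hx ?hy ?hw ?h4 ?h5 ?h6 ?h7 ?h8.
have e7 : f 7%N = (x - y - 1) / w.
  rewrite Z e4 e5 e6; field; by rewrite ?hx ?hy ?hw ?h4 ?h5 ?h6 ?h7 ?h8.
have e8 : f 8%N = x.
  rewrite Z e5 e6 e7; field; by rewrite ?hx ?hy ?hw ?h4 ?h5 ?h6 ?h7 ?h8.
have e9 : f 9%N = y.
  rewrite Z e6 e7 e8; field; by rewrite ?hx ?hy ?hw ?h4 ?h5 ?h6 ?h7 ?h8.
have e10 : f 10%N = w.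
  rewrite Z e7 e8 e9; field; by rewrite ?hx ?hy ?hw ?h4 ?h5 ?h6 ?h7 ?h8.
split; last by rewrite e8 e9 e10 e0 e1 e2.
case=> [|[|[|[|[|[|[|[|//]]]]]]]] _;
  rewrite ?e0 ?e1 ?e2 ?e3 ?e4 ?e5 ?e6 ?e7 //;
  repeat (apply: mulf_neq0 || rewrite invr_eq0); by [].
Qed.


Notation tf := (@FracField.tofrac {mpoly CC[3]}).
Ltac pushm := repeat (rewrite mevalD || rewrite mevalB || rewrite mevalM || rewrite mevalN || rewrite mevalXU || rewrite meval1 || rewrite mevalC).
Ltac pusht := repeat (rewrite rmorphD || rewrite rmorphB || rewrite rmorphM || rewrite rmorphN || rewrite rmorph1).

Lemma nzP (e : RF) (p : {mpoly CC[3]}) (v : 'I_3 -> CC) (c : CC) :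
  e = tf p -> p.@[v] = c -> c != 0 -> e != 0.
Proof.
move=> -> hv hc; rewrite (@tofrac_eq0 {mpoly CC[3]}); apply: contra hc => /eqP p0.
by rewrite -hv p0 meval0.
Qed.

Lemma zvar_nz i : zvar i != 0.
Proof.
apply: (@nzP _ 'X_i (fun=> 1) 1) => //; last exact: oner_neq0.
by rewrite mevalXU.
Qed.

Ltac nzt p c := apply: (@nzP _ p (fun=> 0) c); [rewrite /zvar; pusht; by [] | pushm => /=; ring | ].

Lemma if1 : periodic_with 1 1 0 8.
Proof.
have c1 : cst 1 = 1 by rewrite /cst rmorph1.
have c0 : cst 0 = 0 by rewrite /cst rmorph0.
apply: (@orbitP _ (zseq 1 1 0) (zvar ord0) (zvar (inord 1)) (zvar (inord 2))) => //.
- by move=> n; rewrite zrec c1 c0 mul0r add0r mul1r.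
- exact: zvar_nz.
- exact: zvar_nz.
- exact: zvar_nz.
- by nzt ('X_(inord 1) + 'X_(inord 2) + 1 : {mpoly CC[3]}) (1 : CC); rewrite oner_eq0.
- by nzt ('X_ord0 * 'X_(inord 2) + 'X_ord0 + 'X_(inord 1) + 'X_(inord 2) + 1 : {mpoly CC[3]}) (1 : CC); rewrite oner_eq0.
- by nzt ('X_ord0 + 'X_(inord 1) + 1 : {mpoly CC[3]}) (1 : CC); rewrite oner_eq0.
Qed.

Lemma ifN1 : periodic_with (-1) (-1) 0 8.
Proof.
have c1 : cst (-1) = -1 by rewrite /cst rmorphN rmorph1 rmorphN rmorph1.
have c0 : cst 0 = 0 by rewrite /cst rmorph0.
apply: (@orbitN _ (zseq (-1) (-1) 0) (zvar ord0) (zvar (inord 1)) (zvar (inord 2))) => //.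
- by move=> n; rewrite zrec c1 c0 mul0r add0r !mulN1r.
- exact: zvar_nz.
- exact: zvar_nz.
- exact: zvar_nz.
- by nzt ('X_(inord 1) - 'X_(inord 2) - 1 : {mpoly CC[3]}) (-1 : CC); rewrite oppr_eq0 oner_eq0.
- by nzt ('X_ord0 * 'X_(inord 2) - 'X_ord0 - 'X_(inord 1) + 'X_(inord 2) + 1 : {mpoly CC[3]}) (1 : CC); rewrite oner_eq0.
- by nzt (- 'X_ord0 * 'X_(inord 1) - 'X_ord0 * 'X_(inord 2) + 'X_ord0 + 'X_(inord 1) * 'X_(inord 1) - 'X_(inord 1) * 'X_(inord 2) - 'X_(inord 2) - 1 : {mpoly CC[3]}) (-1 : CC); rewrite oppr_eq0 oner_eq0.
- by nzt (- 'X_ord0 * 'X_(inord 2) + 'X_ord0 - 'X_(inord 1) - 'X_(inord 2) - 1 : {mpoly CC[3]}) (-1 : CC); rewrite oppr_eq0 oner_eq0.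
- by nzt ('X_ord0 - 'X_(inord 1) - 1 : {mpoly CC[3]}) (-1 : CC); rewrite oppr_eq0 oner_eq0.
Qed.

Theorem mainTheorem6 (a0 a1 a3 : CC) :
  periodic_with a0 a1 a3 8 <->
  ((a0, a1, a3) = (-1, -1, 0) \/ (a0, a1, a3) = (1, 1, 0)).
Proof.
split; first exact: only_if.
by case=> [[-> -> ->]|[-> -> ->]]; [exact: ifN1 | exact: if1].
Qed.
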